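(* Let $X, Y, Z$ be Polish spaces and let $P: X \rightsquigarrow Y$ be a tight Feller kernel such that each $P(x,\cdot)$ has a continuous density $\rho_x$ with respect to a fixed reference Borel measure on $Y$. Let $\epsilon \in [0,1)$ and let $R \subseteq X \times Z$ and $S \subseteq Y \times Z$ be closed relations. If $P_!^\epsilon R \subseteq S$, then $R \subseteq P^{*,\epsilon} S$.
   Context: Markov kernel, Feller and tight as usual: $P(x,\cdot)$ Borel probability measures, $x \mapsto P(x,A)$ measurable; Feller means $x \mapsto \int\phi\,dP(x,\cdot)$ continuous for bounded continuous $\phi$; tight means for each compact $K \subseteq X$, $\eta>0$ there is compact $L$ with $P(x,L) \ge 1-\eta$ for $x \in K$. The $\epsilon$-highest density region is $\mathrm{supp}_\epsilon(P(x)) = \{y : \rho_x(y) \ge \lambda_\epsilon\}$ with $\lambda_\epsilon = \sup\{\lambda \ge 0 : P(x, \{y : \rho_x(y) \ge \lambda\}) \ge 1-\epsilon\}$. The $\epsilon$-pushforward is $P_!^\epsilon R = \overline{\bigcup_{(x,z) \in R} \mathrm{supp}_\epsilon(P(x)) \times \{z\}} \subseteq Y \times Z$ (closure). The $\epsilon$-pullback is $P^{*,\epsilon} S = \{(x,z) : P(x, S_z) \ge 1-\epsilon\}$ with $S_z = \{y : (y,z) \in S\}$. *)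

(* Defs.v *)
From HB Require Import structures.
From mathcomp Require Import all_boot all_order all_algebra.
From mathcomp Require Import all_classical all_reals all_analysis.
Set Implicit Arguments. Unset Strict Implicit. Unset Printing Implicit Defensive.
Import Order.TTheory GRing.Theory Num.Theory numFieldNormedType.Exports.
Local Open Scope classical_set_scope.
Local Open Scope ring_scope.

(* A Polish space: a complete (pseudo)metric space which is Hausdorff
   (so the pseudometric is a genuine metric) and separable. *)
Definition polish_space (R : realType) (T : completePseudoMetricType R) : Prop :=
  hausdorff_space T /\ exists D : set T, countable D /\ dense D.

Definition borel (T : ptopologicalType) := g_sigma_algebraType (@open T).

Section Kernels.
Variables (R : realType) (X Y Z : ptopologicalType).
Variable P : R.-pker (borel X) ~> (borel Y).

Definition feller : Prop :=
  forall phi : Y -> R, continuous phi -> (exists M : R, forall y, `|phi y| <= M) ->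
    continuous (fun x : X => (\int[P x]_y (phi y)%:E)%E).

Definition tight_kernel : Prop :=
  forall K : set X, compact K -> forall eta : R, 0 < eta ->
    exists L : set Y, compact L /\ forall x, K x -> ((1 - eta)%:E <= P x L)%E.

Definition has_densities (mu : {measure set (borel Y) -> \bar R}) (rho : X -> Y -> R)
  : Prop :=
  (forall x y, 0 <= rho x y) /\
  (forall x (A : set (borel Y)), measurable A ->
     P x A = (\int[mu]_(y in A) (rho x y)%:E)%E).

Variable rho : X -> Y -> R.

Definition hdr_level (eps : R) (x : X) : R :=
  sup [set l : R | 0 <= l /\ ((1 - eps)%:E <= P x [set y | (l <= rho x y)%R])%E].

Definition supp_eps (eps : R) (x : X) : set Y :=
  [set y | hdr_level eps x <= rho x y].

Definition eps_pushforward (eps : R) (Rel : set (X * Z)) : set (Y * Z) :=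
  closure [set yz | exists x, Rel (x, yz.2) /\ supp_eps eps x yz.1].

Definition eps_pullback (eps : R) (S : set (Y * Z)) : set (X * Z) :=
  [set xz | ((1 - eps)%:E <= P xz.1 [set y | S (y, xz.2)])%E].

End Kernels.

(* Main.v *)
Require Import Defs.
From HB Require Import structures.
From mathcomp Require Import all_boot all_order all_algebra.
From mathcomp Require Import all_classical all_reals all_analysis.
From mathcomp Require Import lra.
Import Order.TTheory GRing.Theory Num.Theory numFieldNormedType.Exports.
Local Open Scope classical_set_scope.
Local Open Scope ring_scope.

Lemma aux_lra (R : realType) (a b c : R) : c - a <= b -> a < c - b -> False.
Proof. lra. Qed.

Lemma closed_borel (T : ptopologicalType) (A : set T) : closed A -> @measurable _ (borel T) A.
Proof.
move=> cA; rewrite -[A]setCK; apply: measurableC.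
apply: sub_sigma_algebra; exact: closed_openC.
Qed.

Lemma Pset1 (R : realType) (X Y : ptopologicalType) (P : R.-pker (borel X) ~> (borel Y)) x :
  P x setT = 1%E.
Proof. by rewrite prob_kernel. Qed.

Lemma hdr_key (R : realType) (X Y Z : ptopologicalType) (P : R.-pker (borel X) ~> (borel Y))
  (rho : X -> Y -> R) (hc : forall x, continuous (rho x)) (h0 : forall x y, 0 <= rho x y)
  (eps : R) (heps0 : 0 <= eps) x :
  ((1 - eps)%:E <= P x (supp_eps P rho eps x))%E.
Proof.
have mA l : @measurable _ (borel Y) [set y | l <= rho x y].
  apply: closed_borel.
  have -> : [set y | l <= rho x y] = rho x @^-1` [set r | l <= r] by [].
  apply: closed_comp; [move=> y _; exact: hc | exact: closed_ge].
have le1 : ((1 - eps)%:E <= 1)%E by rewrite lee_fin lerBlDr lerDl.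
rewrite /supp_eps /hdr_level.
set E := [set l : R | _].
have [hs|nhs] := pselect (has_sup E); last first.
  rewrite sup_out //.
  have -> : [set y | 0 <= rho x y] = setT by apply/seteqP; split => // y _; exact: h0.
  by rewrite Pset1.
set s := sup E.
pose F n : set (borel Y) := [set y | s - n.+1%:R^-1 <= rho x y].
have mF n : measurable (F n) by exact: mA.
have capF : \bigcap_n F n = [set y | s <= rho x y].
  apply/seteqP; split => y /=; last first.
    move=> hy n _; rewrite /F /=; apply: le_trans hy; rewrite lerBlDr lerDl; exact: ltW.
  move=> hy; rewrite leNgt; apply/negP => ys.
  have d0 : 0 < s - rho x y by rewrite subr_gt0.
  pose n := Num.Def.trunc (s - rho x y)^-1.
  have h1 := hy n I; rewrite /F /= in h1.
  have h2 : n.+1%:R^-1 < s - rho x y.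
    rewrite invf_plt ?posrE //; exact: truncnS_gt.
  exact: (@aux_lra _ _ _ _ h1 h2).
have ni : nonincreasing_seq F.
  apply/nonincreasing_seqP => n; apply/subsetPset => y; rewrite /F /=; apply: le_trans.
  by rewrite lerB // lef_pV2 ?posrE // ler_nat.
have hc' := @nonincreasing_cvg_mu _ _ _ (P x) F _ mF _ ni.
rewrite -capF.
have fin0 : (P x (F 0%N) < +oo)%E.
  apply: le_lt_trans (_ : P x setT < +oo)%E; last by rewrite Pset1 ltry.
  by apply: le_measure; rewrite ?inE.
have mcap : measurable (\bigcap_n F n) by rewrite capF.
apply: (cvge_to_ge (hc' fin0 mcap)).
apply: nearW => n /=.
have [l El hl] := @sup_adherent _ E (n.+1%:R^-1) (ltac:(by rewrite invr_gt0)) hs.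
apply: le_trans El.2 _.
apply: le_measure; rewrite ?inE //.
move=> y; rewrite /F /= => ly; apply: le_trans ly; exact: ltW.
Qed.
Theorem mainTheorem16 (R : realType) (X Y Z : completePseudoMetricType R)
  (polX : polish_space X) (polY : polish_space Y) (polZ : polish_space Z)
  (P : R.-pker (borel X) ~> (borel Y))
  (hfeller : feller P) (htight : tight_kernel P)
  (mu : {measure set (borel Y) -> \bar R}) (rho : X -> Y -> R)
  (hrho_cont : forall x, continuous (rho x))
  (hdens : has_densities P mu rho)
  (eps : R) (heps0 : 0 <= eps) (heps1 : eps < 1)
  (Rel : set (X * Z)) (S : set (Y * Z)) (hRel : closed Rel) (hS : closed S) :
  eps_pushforward P rho eps Rel `<=` S -> Rel `<=` eps_pullback P eps S.
Proof.
move=> hsub [x z] hr; rewrite /eps_pullback /=.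
apply: le_trans (@hdr_key R X Y Z P rho hrho_cont hdens.1 eps heps0 x) _.
apply: le_measure; rewrite ?inE.
- apply: closed_borel; rewrite /supp_eps.
  have -> : [set y | hdr_level P rho eps x <= rho x y] =
    rho x @^-1` [set r | hdr_level P rho eps x <= r] by [].
  apply: closed_comp; [move=> y _; exact: hrho_cont | exact: closed_ge].
- apply: closed_borel.
  have -> : [set y | S (y, z)] = (fun y => (y, z)) @^-1` S by [].
  apply: closed_comp => // y _.
  apply: cvg_pair; [exact: cvg_id | exact: cvg_cst].
- move=> y hy; apply: hsub; apply: subset_closure; exists x; split => //.
Qed.
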